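(* Let $A\subset\mathbb{R}^d$ be a finite set that minimally surrounds the origin. (i) For any critical simplex $X\subseteq A$, no point of $A\setminus X$ lies in the linear hull of $X$. (ii) If a critical simplex $X\subseteq A$ contains $k$ points of a critical $k$-simplex $Y\subseteq A$, then $X=Y$.
   Context: A point set in $\mathbb{R}^d$ surrounds the origin if the origin lies in the interior of its convex hull; it minimally surrounds the origin if it surrounds the origin but no proper subset does. A point set $S$ surrounds the origin in a linear subspace $E$ if $S$ spans $E$ and the origin lies in the relative interior of $\mathrm{conv}(S)$. A $k$-simplex is a set of $k+1$ affinely independent points; a simplex $N$ is critical if it surrounds the origin in its linear hull. *)

(* Defs.v *)
From HB Require Import structures.
From mathcomp Require Import all_boot all_order all_algebra.
From mathcomp Require Import reals.
Set Implicit Arguments. Unset Strict Implicit. Unset Printing Implicit Defensive.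
Import Order.TTheory GRing.Theory Num.Theory.
Local Open Scope ring_scope.

Definition in_conv (R : realType) (d : nat) (S : seq 'rV[R]_d) (x : 'rV[R]_d) :=
  exists l : 'rV[R]_d -> R,
    [/\ forall v, v \in S -> 0 <= l v,
        \sum_(v <- undup S) l v = 1
      & x = \sum_(v <- undup S) l v *: v].

Definition in_lin (R : realType) (d : nat) (S : seq 'rV[R]_d) (x : 'rV[R]_d) :=
  exists l : 'rV[R]_d -> R, x = \sum_(v <- undup S) l v *: v.

Definition small (R : realType) (d : nat) (e : R) (y : 'rV[R]_d) :=
  forall i : 'I_d, `|y ord0 i| < e.

Definition surrounds (R : realType) (d : nat) (S : seq 'rV[R]_d) :=
  exists2 e : R, 0 < e & forall y, small e y -> in_conv S y.

Definition min_surrounds (R : realType) (d : nat) (S : seq 'rV[R]_d) :=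
  surrounds S /\
  forall B : seq 'rV[R]_d, {subset B <= S} -> ~ {subset S <= B} -> ~ surrounds B.

Definition surrounds_in (R : realType) (d : nat) (S : seq 'rV[R]_d)
  (E : 'rV[R]_d -> Prop) :=
  (forall x, E x <-> in_lin S x) /\
  exists2 e : R, 0 < e & forall y, E y -> small e y -> in_conv S y.

Definition aff_indep (R : realType) (d : nat) (S : seq 'rV[R]_d) :=
  forall l : 'rV[R]_d -> R,
    \sum_(v <- S) l v = 0 -> \sum_(v <- S) l v *: v = 0 ->
    forall v, v \in S -> l v = 0.

Definition simplex (R : realType) (d : nat) (k : nat) (S : seq 'rV[R]_d) :=
  [/\ uniq S, size S = k.+1 & aff_indep S].

Definition is_simplex (R : realType) (d : nat) (S : seq 'rV[R]_d) :=
  uniq S /\ aff_indep S.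

Definition critical (R : realType) (d : nat) (S : seq 'rV[R]_d) :=
  is_simplex S /\ surrounds_in S (in_lin S).

(* Main.v *)
Require Import Defs.
From mathcomp Require Import all_boot all_order all_algebra.
From mathcomp Require Import reals.
From mathcomp Require Import ring lra.
Import Order.TTheory GRing.Theory Num.Theory.
Local Open Scope ring_scope.

Lemma big_ind_sub (T : eqType) (V : nmodType) (U X : seq T) (F : T -> V) :
  uniq U -> uniq X -> {subset X <= U} ->
  \sum_(v <- U) (if v \in X then F v else 0) = \sum_(v <- X) F v.
Proof.
move=> uU uX sXU; rewrite -big_mkcond /= -big_filter; apply: perm_big.
apply: uniq_perm; [exact: filter_uniq | exact: uX | ].
move=> v; rewrite mem_filter; apply/andP/idP => [[]//|vX]; split => //; exact: sXU.
Qed.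

Lemma big_ind_subZ (R : realType) (d : nat) (U X : seq 'rV[R]_d) (f : 'rV[R]_d -> R) :
  uniq U -> uniq X -> {subset X <= U} ->
  \sum_(v <- U) (if v \in X then f v else 0) *: v = \sum_(v <- X) f v *: v.
Proof.
move=> uU uX sXU; rewrite -(@big_ind_sub _ _ U X (fun v => f v *: v) uU uX sXU); apply: eq_bigr => v _.
by case: ifP => _; rewrite ?scale0r.
Qed.

Lemma bary_uniq (R : realType) (d : nat) (X : seq 'rV[R]_d) (l1 l2 : 'rV[R]_d -> R) :
  aff_indep X -> \sum_(v <- X) l1 v = \sum_(v <- X) l2 v ->
  \sum_(v <- X) l1 v *: v = \sum_(v <- X) l2 v *: v ->
  forall v, v \in X -> l1 v = l2 v.
Proof.
move=> H s1 s2 v vX; apply/eqP; rewrite -subr_eq0; apply/eqP.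
apply: (H (fun v => l1 v - l2 v)) => //; first by rewrite sumrB s1 subrr.
rewrite (eq_bigr (fun v => l1 v *: v - l2 v *: v)); last by move=> i _; rewrite scalerBl.
by rewrite sumrB s2 subrr.
Qed.

Lemma small_scale (R : realType) (d : nat) (e : R) (y : 'rV[R]_d) :
  0 < e -> exists t : R, [/\ 0 < t, t <= 1 & small e (t *: y)].
Proof.
move=> e0; set M := \sum_(i < d) `|y ord0 i|.
have M0 : 0 <= M by apply: sumr_ge0 => i _; exact: normr_ge0.
have eM0 : 0 < e + M by lra.
have ht : e / (e + M) * (e + M) = e by rewrite divfK // gt_eqF.
have tp : 0 < e / (e + M) by rewrite divr_gt0.
exists (e / (e + M)); split => //; first by nra.
move=> i; rewrite mxE normrM (gtr0_norm tp).
have yi : `|y ord0 i| <= M.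
  rewrite /M (bigD1 i) //= lerDl; apply: sumr_ge0 => j _; exact: normr_ge0.
nra.
Qed.

Lemma in_lin_scale (R : realType) (d : nat) (X : seq 'rV[R]_d) (c : R) x :
  in_lin X x -> in_lin X (c *: x).
Proof.
case=> l ->; exists (fun v => c * l v); rewrite scaler_sumr.
by apply: eq_bigr => v _; rewrite scalerA.
Qed.

Lemma in_lin_mem (R : realType) (d : nat) (X : seq 'rV[R]_d) x :
  x \in X -> in_lin X x.
Proof.
move=> xX; exists (fun v => if v \in [:: x] then 1 else 0).
rewrite big_ind_subZ ?undup_uniq // ?big_seq1 ?scale1r //.
by move=> v; rewrite mem_seq1 => /eqP->; rewrite mem_undup.
Qed.

Lemma crit_pos (R : realType) (d : nat) (X : seq 'rV[R]_d) : critical X ->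
  exists mu : 'rV[R]_d -> R, [/\ forall v, v \in X -> 0 < mu v,
     \sum_(v <- X) mu v = 1 & \sum_(v <- X) mu v *: v = 0].
Proof.
case=> [[uX aX] [_ [e e0 He]]].
have [lam [lam0 lam1 lamE]] : in_conv X 0.
  apply: He; last by move=> i; rewrite mxE normr0.
  by exists (fun _ => 0); rewrite big1 // => v _; rewrite scale0r.
rewrite (undup_id uX) in lam1 lamE.
exists lam; split => // x0 x0X.
have [t [t0 t1 st]] := @small_scale R d e (- x0) e0.
have : in_conv X (t *: - x0).
  apply: He => //; apply: in_lin_scale.
  rewrite -scaleN1r; apply: in_lin_scale; exact: in_lin_mem.
case=> nu [nu0 nu1 nuE]; rewrite (undup_id uX) in nu1 nuE.
have sx : {subset [:: x0] <= X} by move=> v; rewrite mem_seq1 => /eqP->.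
pose l2 v := (nu v + (if v \in [:: x0] then t else 0)) / (1 + t).
have t10 : 1 + t != 0 by rewrite gt_eqF //; lra.
have -> : lam x0 = l2 x0.
  apply: (@bary_uniq R d X lam l2 aX) => //.
    rewrite lam1 /l2 -mulr_suml big_split /= big_ind_sub // big_seq1 nu1 divff //.
  rewrite -lamE /l2.
  rewrite (eq_bigr (fun v => (1 + t)^-1 *: ((nu v + (if v \in [:: x0] then t else 0)) *: v))); last first.
    by move=> v _; rewrite scalerA mulrC.
  rewrite -scaler_sumr.
  rewrite (eq_bigr (fun v => nu v *: v + (if v \in [:: x0] then t else 0) *: v)); last first.
    by move=> v _; rewrite scalerDl.
  by rewrite big_split /= big_ind_subZ // big_seq1 -nuE scalerN addNr scaler0.
rewrite /l2 mem_seq1 eqxx; apply: divr_gt0; have := nu0 x0 x0X; lra.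
Qed.

Lemma part1 (R : realType) (d : nat) (A : seq 'rV[R]_d) :
  min_surrounds A ->
  (forall X : seq 'rV[R]_d, {subset X <= A} -> critical X ->
     forall a, a \in A -> a \notin X -> ~ in_lin X a).
Proof.
move=> [[eA eA0 HA] Hmin] X XA cX a aA aX la.
have [mu [mu0 mu1 muE]] := @crit_pos R d X cX.
case: cX => [[uX aiX] [_ [e e0 He]]].
have [c [c0 c1 sc]] := @small_scale R d e a e0.
have [nu [nu0 nu1 nuE]] : in_conv X (c *: a) by apply: He => //; apply: (@in_lin_scale R d).
rewrite (undup_id uX) in nu1 nuE.
pose B := [seq v <- A | v != a].
apply: (Hmin B).
- by move=> v; rewrite mem_filter => /andP[].
- by move=> /(_ a aA); rewrite mem_filter eqxx.
exists (eA * c); first by rewrite mulr_gt0.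
move=> y sy.
have [lam [lam0 lam1 lamE]] : in_conv A (c^-1 *: y).
  apply: HA => i; rewrite mxE normrM (gtr0_norm (_ : 0 < c^-1)) ?invr_gt0 // mulrC ltr_pdivrMr //.

pose U := undup A.
have uU : uniq U := undup_uniq A.
have aU : a \in U by rewrite mem_undup.
pose W := [seq v <- U | v != a].
have UB : undup B = W by rewrite /W /U filter_undup.
have uW : uniq W by rewrite filter_uniq.
have XW : {subset X <= W}.
  move=> v vX; rewrite mem_filter mem_undup XA // andbT.
  by apply: contraNneq aX => <-.
have WA : forall v, v \in W -> v \in A by move=> v; rewrite mem_filter mem_undup => /andP[].
have splitU : forall F : 'rV[R]_d -> R, \sum_(v <- U) F v = F a + \sum_(v <- W) F v.
  by move=> F; rewrite (bigD1_seq a aU uU) /= big_filter.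
have splitUZ : \sum_(v <- U) lam v *: v = lam a *: a + \sum_(v <- W) lam v *: v.
  by rewrite (bigD1_seq a aU uU) /= big_filter.
have sW : \sum_(v <- W) lam v = 1 - lam a.
  by have h := splitU lam; rewrite /U lam1 in h; rewrite h addrAC subrr add0r.
have sW0 : 0 <= \sum_(v <- W) lam v.
  by rewrite big_seq; apply: sumr_ge0 => v /WA; apply: lam0.
have la0 : 0 <= lam a by apply: lam0.
pose r := 1 - (lam a + c * (1 - lam a)).
have r0 : 0 <= r by rewrite /r; nra.
exists (fun v => c * lam v + (if v \in X then lam a * nu v + r * mu v else 0)).
rewrite UB; split.
- move=> v; rewrite mem_filter => /andP[_ vA].
  apply: addr_ge0; first by apply: mulr_ge0; [lra | exact: lam0].
  case: ifP => vX //; apply: addr_ge0; apply: mulr_ge0 => //; [exact: nu0 | exact: ltW (mu0 v vX)].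
- rewrite big_split /= -mulr_sumr sW big_ind_sub // big_split /= -!mulr_sumr nu1 mu1 /r.
  ring.
- have -> : y = c *: (c^-1 *: y) by rewrite scalerKV // gt_eqF.
  rewrite lamE -/U splitUZ.
  rewrite [RHS](eq_bigr (fun v => (c * lam v) *: v + (if v \in X then lam a * nu v + r * mu v else 0) *: v)); last first.
    by move=> v _; rewrite scalerDl.
  rewrite big_split /= big_ind_subZ //.
  rewrite [X in _ = _ + X](eq_bigr (fun v => lam a *: (nu v *: v) + r *: (mu v *: v))); last first.
    by move=> v _; rewrite scalerDl !scalerA.
  rewrite big_split /= -!scaler_sumr -nuE muE scaler0 addr0.
  rewrite scalerDr scaler_sumr addrC !scalerA (mulrC c).
  by congr (_ + _); apply: eq_bigr => v _; rewrite scalerA.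
Qed.

Lemma part2 (R : realType) (d : nat) (A : seq 'rV[R]_d) :
  (forall X : seq 'rV[R]_d, {subset X <= A} -> critical X ->
     forall a, a \in A -> a \notin X -> ~ in_lin X a) ->
  (forall (X Y : seq 'rV[R]_d) (k : nat),
     {subset X <= A} -> critical X ->
     {subset Y <= A} -> simplex k Y -> critical Y ->
     (k <= count (mem X) Y)%N ->
     X =i Y).
Proof.
move=> P1 X Y k XA cX YA [uY szY _] cY kc.
have uX : uniq X by case: cX => [[]].
have [muY [muY0 muY1 muYE]] := @crit_pos R d Y cY.
case: (boolP (all (mem X) Y)) => [/allP YX | ].
  have [muX [muX0 muX1 muXE]] := @crit_pos R d X cX.
  suff XY : {subset X <= Y} by move=> v; apply/idP/idP => [/XY|/YX].
  move=> x xX; apply/negPn/negP => xY.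
  have := muX0 x xX.
  have -> : muX x = (if x \in Y then muY x else 0).
    apply: (@bary_uniq R d X muX (fun v => if v \in Y then muY v else 0)) => //.
    - by case: cX => [[]].
    - by rewrite muX1 big_ind_sub.
    - by rewrite muXE big_ind_subZ.
  by rewrite (negbTE xY) ltxx.
rewrite -has_predC => /hasP [y yY /= yX].
have pY := perm_to_rem yY.
have cnt : count (mem X) Y = count (mem X) (rem y Y).
  by rewrite (permP pY) /= (negbTE yX).
have sz : size (rem y Y) = k by rewrite size_rem // szY.
have allR : all (mem X) (rem y Y).
  by rewrite all_count eqn_leq count_size -cnt sz kc.
exfalso; apply: (P1 X XA cX y (YA y yY) yX).
exists (fun v => if v \in rem y Y then - (muY v / muY y) else 0).
have uR : uniq (rem y Y) := rem_uniq y uY.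
have sR : {subset rem y Y <= X} by move=> v /(allP allR).
rewrite undup_id // big_ind_subZ //.
move: muYE; rewrite (perm_big _ pY) big_cons => h0.
have h : \sum_(v <- rem y Y) muY v *: v = - (muY y *: y).
  by apply/eqP; rewrite -addr_eq0 addrC; apply/eqP; exact: h0.
rewrite (eq_bigr (fun v => (- (muY y)^-1) *: (muY v *: v))); last first.
  by move=> v _; rewrite scalerA mulNr mulrC.
rewrite -scaler_sumr h scalerN scaleNr opprK scalerA mulVf ?scale1r //.
by rewrite gt_eqF // muY0.
Qed.

Theorem lemma16 (R : realType) (d : nat) (A : seq 'rV[R]_d) :
  min_surrounds A ->
  (forall X : seq 'rV[R]_d, {subset X <= A} -> critical X ->
     forall a, a \in A -> a \notin X -> ~ in_lin X a) /\
  (forall (X Y : seq 'rV[R]_d) (k : nat),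
     {subset X <= A} -> critical X ->
     {subset Y <= A} -> simplex k Y -> critical Y ->
     (k <= count (mem X) Y)%N ->
     X =i Y).
Proof.
move=> H; have P1 := @part1 R d A H; split => //; exact: (@part2 R d A P1).
Qed.
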